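(* For every integer $t$, \[ \sum_{n=1}^\infty\binom{2n}{n}\frac{O_n}{8^n}L_{n+t}=\sqrt2\,L_{t+1}\ln\alpha+\frac{\sqrt{10}\,\ln2}{2}F_{t+1},\qquad \sum_{n=1}^\infty\binom{2n}{n}\frac{O_n}{8^n}F_{n+t}=\sqrt2\,F_{t+1}\ln\alpha+\frac{\ln2}{\sqrt{10}}L_{t+1}, \] and, more generally, for every gibonacci sequence $(G_j)=(G_j(a,b))$, \[ \sum_{n=1}^\infty\binom{2n}{n}\frac{O_n}{8^n}G_{n+t}=\sqrt2\,G_{t+1}\ln\alpha+\frac{\ln2}{\sqrt{10}}\bigl(G_{t+2}+G_t\bigr). \]
   Context: $O_n=\sum_{j=1}^n\frac1{2j-1}$. $F_n$ and $L_n$ are the Fibonacci and Lucas numbers ($F_0=0,F_1=1$, $L_0=2,L_1=1$, $u_n=u_{n-1}+u_{n-2}$), extended to all integers by the recurrence. $\alpha=(1+\sqrt5)/2$, $\beta=-1/\alpha$, so $F_n=(\alpha^n-\beta^n)/(\alpha-\beta)$, $L_n=\alpha^n+\beta^n$. For numbers $a,b$ not both zero, the gibonacci sequence $G_j=G_j(a,b)$ is defined by $G_0=a$, $G_1=b$, $G_j=G_{j-1}+G_{j-2}$, extended to negative indices by $G_{-j}=G_{-(j-2)}-G_{-(j-1)}$; equivalently $G_j=\frac{(b-a\beta)\alpha^j+(a\alpha-b)\beta^j}{\alpha-\beta}$. *)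

(* Defs.v *)
From Stdlib Require Import Reals ZArith Lia.
From Coquelicot Require Import Coquelicot.
Open Scope R_scope.

Fixpoint Oh (n : nat) : R :=
  match n with
  | O => 0
  | S m => Oh m + / (2 * INR (S m) - 1)
  end.

Fixpoint gib_pos_pair (a b : R) (n : nat) : R * R :=
  match n with
  | O => (a, b)
  | S m => let p := gib_pos_pair a b m in (snd p, fst p + snd p)
  end.
Definition gib_pos (a b : R) (n : nat) : R := fst (gib_pos_pair a b n).

(* H_j = G_{-j}, pairs (H_j, H_{j+1}); H_0 = a, H_1 = G_{-1} = b - a,
   and G_{-(j+2)} = G_{-j} - G_{-(j+1)}. *)
Fixpoint gib_neg_pair (a b : R) (n : nat) : R * R :=
  match n with
  | O => (a, b - a)
  | S m => let p := gib_neg_pair a b m in (snd p, fst p - snd p)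
  end.
Definition gib_neg (a b : R) (n : nat) : R := fst (gib_neg_pair a b n).

Definition gib (a b : R) (j : Z) : R :=
  match j with
  | Z0 => a
  | Zpos p => gib_pos a b (Pos.to_nat p)
  | Zneg p => gib_neg a b (Pos.to_nat p)
  end.

Definition Fib (j : Z) : R := gib 0 1 j.
Definition Luc (j : Z) : R := gib 2 1 j.

Definition alpha : R := (1 + sqrt 5) / 2.

Definition term (u : Z -> R) (t : Z) (n : nat) : R :=
  Binomial.C (2 * n)%nat n * Oh n / 8 ^ n * u (Z.of_nat n + t)%Z.

(* Main.v *)
Require Import Defs.
From Stdlib Require Import Reals ZArith Lia Lra.
From Coquelicot Require Import Coquelicot.
Open Scope R_scope.

Definition cc (n : nat) : R := Binomial.C (2 * n) n.
Definition aa (n : nat) : R := cc n * Oh n.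

Lemma cc_rec n : cc (S n) * INR (S n) = 2 * (2 * INR n + 1) * cc n.
Proof.
  unfold cc, Binomial.C.
  replace (2 * S n - S n)%nat with (S n) by lia.
  replace (2 * n - n)%nat with n by lia.
  replace (2 * S n)%nat with (S (S (2 * n))) by lia.
  change (fact (S (S (2*n)))) with (S (S (2*n)) * fact (S (2*n)))%nat.
  change (fact (S (2*n))) with (S (2*n) * fact (2*n))%nat.
  change (fact (S n)) with (S n * fact n)%nat.
  rewrite !mult_INR, !S_INR, mult_INR.
  assert (H1 := INR_fact_neq_0 n). assert (H2 := INR_fact_neq_0 (2*n)).
  assert (0 <= INR n) by apply pos_INR.
  simpl (INR 2).
  field. repeat split; lra.
Qed.

Lemma cc_pos n : 0 < cc n.
Proof.
  unfold cc, Binomial.C. apply Rdiv_lt_0_compat.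
  apply INR_fact_lt_0. apply Rmult_lt_0_compat; apply INR_fact_lt_0.
Qed.

Lemma cc_le n : cc n <= 4 ^ n.
Proof.
  induction n.
  - unfold cc, Binomial.C. simpl. lra.
  - assert (H := cc_rec n). assert (P := cc_pos n). assert (0 <= INR n) by apply pos_INR.
    rewrite S_INR in H.
    assert (cc (S n) <= 4 * cc n).
    { apply Rmult_le_reg_r with (INR n + 1). lra. rewrite H. nra. }
    simpl. lra.
Qed.

Lemma Oh_S n : Oh (S n) = Oh n + / (2 * INR n + 1).
Proof. replace (2*INR n+1) with (2*INR (S n) -1) by (rewrite S_INR; ring). reflexivity. Qed.

Lemma Oh_bnd n : 0 <= Oh n <= INR n.
Proof.
  induction n. simpl. lra.
  rewrite Oh_S, S_INR. assert (0 <= INR n) by apply pos_INR.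
  assert (0 < / (2 * INR n + 1)) by (apply Rinv_0_lt_compat; lra).
  assert (/ (2 * INR n + 1) <= 1).
  { rewrite <- Rinv_1. apply Rinv_le_contravar; lra. }
  lra.
Qed.

Lemma aa_rec n : INR (S n) * aa (S n) = 2 * (2 * INR n + 1) * aa n + 2 * cc n.
Proof.
  unfold aa. rewrite Oh_S. assert (H := cc_rec n).
  assert (0 <= INR n) by apply pos_INR.
  replace (INR (S n) * (cc (S n) * (Oh n + / (2 * INR n + 1))))
    with ((cc (S n) * INR (S n)) * (Oh n + / (2 * INR n + 1))) by ring.
  rewrite H. field. lra.
Qed.

Lemma rad_le (a b : nat -> R) : (forall n, Rabs (a n) <= Rabs (b n)) ->
  Rbar_le (CV_radius b) (CV_radius a).
Proof.
  intros H. unfold CV_radius.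
  apply (is_lub_Rbar_subset (CV_disk a) (CV_disk b)).
  - intros r Hr. unfold CV_disk in *. eapply (@ex_series_le R_AbsRing R_CompleteNormedModule); [|exact Hr].
    intros n. change (norm (Rabs (a n * r ^ n))) with (Rabs (Rabs (a n * r ^ n))).
    rewrite Rabs_Rabsolu, !Rabs_mult. apply Rmult_le_compat_r. apply Rabs_pos. apply H.
  - apply Lub_Rbar_correct.
  - apply Lub_Rbar_correct.
Qed.

Lemma rad_geom : CV_radius (fun n => 4 ^ n) = / 4.
Proof.
  apply CV_radius_finite_DAlembert.
  - intros; apply pow_nonzero; lra.
  - lra.
  - apply is_lim_seq_ext with (fun _ => 4). 2: apply is_lim_seq_const.
    intros n. simpl. rewrite Rabs_pos_eq. field. apply pow_nonzero; lra.
    assert (0 < 4 ^ n) by (apply pow_lt; lra).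
    apply Rlt_le. apply Rdiv_lt_0_compat; nra.
Qed.

Lemma incr_derive (a : nat -> R) n : PS_incr_1 (PS_derive a) n = INR n * a n.
Proof. destruct n. simpl. change (@zero R_NormedModule) with 0. simpl. ring. reflexivity. Qed.

Lemma rad_cc : Rbar_le (/4) (CV_radius cc).
Proof.
  rewrite <- rad_geom. apply rad_le. intros n.
  assert (H:= cc_le n). assert (P := cc_pos n).
  rewrite !Rabs_pos_eq; lra.
Qed.

Lemma rad_aa : Rbar_le (/4) (CV_radius aa).
Proof.
  rewrite <- rad_geom, <- CV_radius_derive, <- CV_radius_incr_1. apply rad_le. intros n.
  rewrite incr_derive. unfold aa.
  assert (H:= cc_le n). assert (P := cc_pos n). assert (Q := Oh_bnd n).
  assert (0 <= INR n) by apply pos_INR.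
  assert (0 < 4 ^ n) by (apply pow_lt; lra).
  rewrite !Rabs_pos_eq; nra.
Qed.

Lemma ode_gen a x : Rbar_lt (Rabs x) (CV_radius a) ->
  PSeries (PS_derive a) x * (1 - 4 * x) =
  PSeries (fun n => PS_derive a n - 4 * (INR n * a n)) x.
Proof.
  intros Hx.
  rewrite (PSeries_ext (fun n => PS_derive a n - 4 * (INR n * a n)) (PS_minus (PS_derive a) (PS_scal 4 (PS_incr_1 (PS_derive a))))).
  2:{ intros n. unfold PS_minus, PS_scal. rewrite incr_derive. reflexivity. }
  rewrite PSeries_minus, PSeries_scal, PSeries_incr_1.
  - ring.
  - apply ex_pseries_derive; auto.
  - apply ex_pseries_scal. intros; apply Rmult_comm.
    apply ex_pseries_incr_1, ex_pseries_derive; auto.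
Qed.

Lemma in_rad a x : Rbar_le (/4) (CV_radius a) -> Rabs x < /4 -> Rbar_lt (Rabs x) (CV_radius a).
Proof. intros H1 H2. eapply Rbar_lt_le_trans; [|exact H1]. exact H2. Qed.

Lemma const_interval (f : R -> R) x : Rabs x < /4 ->
  (forall t, Rabs t < /4 -> is_derive f t 0) -> f x = f 0.
Proof.
  intros Hx H.
  destruct (Rtotal_order x 0) as [Hl|[He|Hg]].
  - apply eq_is_derive; [|exact Hl]. intros t Ht. apply H.
    apply Rabs_def1; rewrite Rabs_left in Hx; lra.
  - subst; reflexivity.
  - symmetry. apply eq_is_derive; [|exact Hg]. intros t Ht. apply H.
    apply Rabs_def1; rewrite Rabs_pos_eq in Hx; lra.
Qed.

Lemma C_closed x : Rabs x < /4 -> PSeries cc x = / sqrt (1 - 4 * x).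
Proof.
  intros Hx.
  assert (Hy : 0 < 1 - 4 * x) by (apply Rabs_def2 in Hx; lra).
  assert (Hs : 0 < sqrt (1 - 4 * x)) by (apply sqrt_lt_R0; lra).
  assert (E : sqrt (1 - 4 * x) * PSeries cc x = sqrt (1 - 4 * 0) * PSeries cc 0).
  { apply (const_interval (fun t => sqrt (1 - 4 * t) * PSeries cc t)); auto.
    intros t Ht.
    assert (Hty : 0 < 1 - 4 * t) by (apply Rabs_def2 in Ht; lra).
    assert (Hts : 0 < sqrt (1 - 4 * t)) by (apply sqrt_lt_R0; lra).
    assert (D1 : is_derive (fun t => sqrt (1 - 4 * t)) t (-4 / (2 * sqrt (1 - 4 * t)))).
    { apply (is_derive_sqrt (fun t => 1 - 4 * t)); auto. auto_derive; auto. ring. }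
    assert (D2 := is_derive_PSeries cc t (in_rad _ _ rad_cc Ht)).
    assert (D := is_derive_mult _ _ _ _ _ D1 D2 ltac:(intros; apply Rmult_comm)).
    simpl in D.
    assert (O := ode_gen cc t (in_rad _ _ rad_cc Ht)).
    rewrite (PSeries_ext (fun n => PS_derive cc n - 4 * (INR n * cc n)) (PS_scal 2 cc)) in O.
    2:{ intros n. unfold PS_derive, PS_scal. change (scal 2 (cc n)) with (2 * cc n).
        assert (K := cc_rec n). rewrite S_INR in *. lra. }
    rewrite PSeries_scal in O.
    match type of D with is_derive _ _ ?v => replace 0 with v; [exact D|] end.
    unfold plus, mult; simpl.
    assert (sqrt (1 - 4 * t) * sqrt (1 - 4 * t) = 1 - 4 * t) by (apply sqrt_sqrt; lra).
    apply Rmult_eq_reg_l with (sqrt (1 - 4 * t)); [|lra].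
    field_simplify; [|lra]. nra. }
  rewrite PSeries_0, Rmult_0_r, Rminus_0_r, sqrt_1 in E.
  assert (C0 : cc 0 = 1) by (unfold cc, Binomial.C; simpl; field).
  rewrite C0 in E.
  apply Rmult_eq_reg_l with (sqrt (1 - 4 * x)); [|lra]. rewrite E. field. lra.
Qed.

Lemma A_closed x : Rabs x < /4 -> PSeries aa x = - ln (1 - 4 * x) / (2 * sqrt (1 - 4 * x)).
Proof.
  intros Hx.
  assert (Hy : 0 < 1 - 4 * x) by (apply Rabs_def2 in Hx; lra).
  assert (Hs : 0 < sqrt (1 - 4 * x)) by (apply sqrt_lt_R0; lra).
  assert (E : sqrt (1 - 4 * x) * PSeries aa x + ln (1 - 4 * x) / 2
            = sqrt (1 - 4 * 0) * PSeries aa 0 + ln (1 - 4 * 0) / 2).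
  { apply (const_interval (fun t => sqrt (1 - 4 * t) * PSeries aa t + ln (1 - 4 * t) / 2)); auto.
    intros t Ht.
    assert (Hty : 0 < 1 - 4 * t) by (apply Rabs_def2 in Ht; lra).
    assert (Hts : 0 < sqrt (1 - 4 * t)) by (apply sqrt_lt_R0; lra).
    assert (D1 : is_derive (fun t => sqrt (1 - 4 * t)) t (-4 / (2 * sqrt (1 - 4 * t)))).
    { apply (is_derive_sqrt (fun t => 1 - 4 * t)); auto. auto_derive; auto. ring. }
    assert (D2 := is_derive_PSeries aa t (in_rad _ _ rad_aa Ht)).
    assert (D3 : is_derive (fun t => ln (1 - 4 * t) / 2) t (-4 / (1 - 4 * t) / 2)).
    { auto_derive; auto. field. lra. }
    assert (D4 := is_derive_mult _ _ _ _ _ D1 D2 ltac:(intros; apply Rmult_comm)).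
    assert (D := is_derive_plus _ _ _ _ _ D4 D3).
    simpl in D.
    assert (O := ode_gen aa t (in_rad _ _ rad_aa Ht)).
    rewrite (PSeries_ext (fun n => PS_derive aa n - 4 * (INR n * aa n)) (PS_plus (PS_scal 2 aa) (PS_scal 2 cc))) in O.
    2:{ intros n. unfold PS_derive, PS_scal, PS_plus.
        change (plus (scal 2 (aa n)) (scal 2 (cc n))) with (2 * aa n + 2 * cc n).
        assert (K := aa_rec n). rewrite S_INR in *. lra. }
    assert (X1 : ex_pseries (PS_scal 2 aa) t).
    { apply ex_pseries_scal. intros; apply Rmult_comm. apply CV_radius_inside, (in_rad _ _ rad_aa Ht). }
    assert (X2 : ex_pseries (PS_scal 2 cc) t).
    { apply ex_pseries_scal. intros; apply Rmult_comm. apply CV_radius_inside, (in_rad _ _ rad_cc Ht). }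
    rewrite (PSeries_plus _ _ _ X1 X2), !PSeries_scal, (C_closed t Ht) in O.
    match type of D with is_derive _ _ ?v => replace 0 with v; [exact D|] end.
    unfold plus, mult; simpl.
    assert (sqrt (1 - 4 * t) * sqrt (1 - 4 * t) = 1 - 4 * t) by (apply sqrt_sqrt; lra).
    set (y := sqrt (1 - 4 * t)) in *. rewrite <- H in O |- *.
    set (A := PSeries aa t) in *. set (A' := PSeries (PS_derive aa) t) in *.
    transitivity ((A' * (y * y) - 2 * A - 2 * / y) / y).
    { field. lra. }
    rewrite O. field. lra. }
  rewrite PSeries_0, Rmult_0_r, Rminus_0_r, sqrt_1, ln_1 in E.
  assert (A0 : aa 0 = 0) by (unfold aa; simpl; ring). rewrite A0 in E.
  apply Rmult_eq_reg_l with (sqrt (1 - 4 * x)); [|lra]. assert (E' : sqrt (1 - 4 * x) * PSeries aa x = - ln (1 - 4 * x) / 2) by lra.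
  rewrite E'. field. lra.
Qed.

Lemma ser x : Rabs x < /4 ->
  is_series (fun k => aa (S k) * x ^ (S k)) (- ln (1 - 4 * x) / (2 * sqrt (1 - 4 * x))).
Proof.
  intros Hx. rewrite <- A_closed by exact Hx.
  apply (is_series_incr_1 (fun k => aa k * x ^ k)).
  assert (A0 : aa 0 = 0) by (unfold aa; simpl; ring).
  rewrite A0. change (plus (PSeries aa x) (0 * x ^ 0)) with (PSeries aa x + 0 * x ^ 0).
  rewrite Rmult_0_l, Rplus_0_r.
  apply is_pseries_R. apply PSeries_correct, CV_radius_inside, in_rad; auto using rad_aa.
Qed.

Definition beta : R := (1 - sqrt 5) / 2.

Lemma s5 : sqrt 5 * sqrt 5 = 5.
Proof. apply sqrt_sqrt; lra. Qed.
Lemma s5pos : 2 < sqrt 5.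
Proof. assert (0 <= sqrt 5) by apply sqrt_pos. assert (H5 := s5). nra. Qed.
Lemma al2 : alpha * alpha = alpha + 1.
Proof. unfold alpha. assert (H := s5). field_simplify. replace (sqrt 5 ^ 2) with 5 by (simpl; rewrite Rmult_1_r; exact (eq_sym H)). field. Qed.
Lemma alpos : 1 < alpha.
Proof. unfold alpha. assert (H := s5pos). lra. Qed.
Lemma be : beta = 1 - alpha.
Proof. unfold beta, alpha. field. Qed.

Lemma Lval1 : - ln (1 - 4 * (alpha / 8)) / (2 * sqrt (1 - 4 * (alpha / 8)))
  = sqrt 2 * alpha * (ln 2 + 2 * ln alpha) / 2.
Proof.
  assert (E := al2). assert (P := alpos).
  replace (1 - 4 * (alpha / 8)) with (/ (2 * (alpha * alpha))).
  2:{ apply Rmult_eq_reg_l with (2 * (alpha * alpha)). 2: nra.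
      rewrite Rinv_r by nra. rewrite E. nra. }
  rewrite sqrt_inv, sqrt_mult, sqrt_square, ln_Rinv, !ln_mult by nra.
  assert (0 < sqrt 2) by (apply sqrt_lt_R0; lra).
  field. lra.
Qed.

Lemma Lval2 : - ln (1 - 4 * (beta / 8)) / (2 * sqrt (1 - 4 * (beta / 8)))
  = - sqrt 2 * (alpha - 1) * (2 * ln alpha - ln 2) / 2.
Proof.
  assert (E := al2). assert (P := alpos). rewrite be.
  replace (1 - 4 * ((1 - alpha) / 8)) with ((alpha * alpha) * / 2).
  2:{ rewrite E. field. }
  rewrite sqrt_mult, sqrt_square, sqrt_inv, ln_mult, ln_Rinv, !ln_mult by nra.
  assert (0 < sqrt 2) by (apply sqrt_lt_R0; lra).
  apply Rmult_eq_reg_l with alpha. 2: lra.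
  field_simplify. 2: split; lra.
  replace (alpha ^ 2) with (alpha + 1) by (simpl; rewrite Rmult_1_r; exact (eq_sym E)).
  field.
Qed.

Lemma gib_nat a b n : gib a b (Z.of_nat n) = gib_pos a b n.
Proof.
  destruct n. reflexivity.
  simpl. rewrite SuccNat2Pos.id_succ. reflexivity.
Qed.

Lemma gib_negn a b n : gib a b (- Z.of_nat (S n)) = gib_neg a b (S n).
Proof. simpl. rewrite SuccNat2Pos.id_succ. reflexivity. Qed.

Lemma gib_pos_rec a b n : gib_pos a b (S (S n)) = gib_pos a b (S n) + gib_pos a b n.
Proof. unfold gib_pos. simpl. ring. Qed.

Lemma gib_neg_rec a b n : gib_neg a b (S (S n)) = gib_neg a b n - gib_neg a b (S n).
Proof. unfold gib_neg. simpl. ring. Qed.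

Lemma gib_rec a b j : gib a b (j + 2) = gib a b (j + 1) + gib a b j.
Proof.
  destruct (Z_le_gt_dec 0 j) as [H|H].
  - replace j with (Z.of_nat (Z.to_nat j)) by lia. set (n := Z.to_nat j).
    replace (Z.of_nat n + 2)%Z with (Z.of_nat (S (S n))) by lia.
    replace (Z.of_nat n + 1)%Z with (Z.of_nat (S n)) by lia.
    rewrite !gib_nat. apply gib_pos_rec.
  - replace j with (- Z.of_nat (S (Z.to_nat (- j - 1))))%Z by lia.
    set (n := Z.to_nat (- j - 1)).
    destruct n as [|[|m]].
    + simpl. unfold gib_pos, gib_neg. simpl. ring.
    + simpl. unfold gib_pos, gib_neg. simpl. ring.
    + replace (- Z.of_nat (S (S (S m))) + 2)%Z with (- Z.of_nat (S m))%Z by lia.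
      replace (- Z.of_nat (S (S (S m))) + 1)%Z with (- Z.of_nat (S (S m)))%Z by lia.
      rewrite !gib_negn. rewrite (gib_neg_rec a b (S m)). ring.
Qed.

Lemma zero_ext (w : Z -> R) :
  (forall j, w (j + 2)%Z = w (j + 1)%Z + w j) -> w 0%Z = 0 -> w 1%Z = 0 ->
  forall j, w j = 0.
Proof.
  intros R0 H0 H1.
  assert (P : forall n, w (Z.of_nat n) = 0 /\ w (Z.of_nat n + 1)%Z = 0).
  { induction n. simpl. auto.
    destruct IHn as [A B]. split.
    - replace (Z.of_nat (S n)) with (Z.of_nat n + 1)%Z by lia. exact B.
    - replace (Z.of_nat (S n) + 1)%Z with (Z.of_nat n + 2)%Z by lia.
      rewrite R0, A, B. ring. }
  assert (N : forall n, w (- Z.of_nat n)%Z = 0 /\ w (- Z.of_nat n + 1)%Z = 0).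
  { induction n. simpl. auto.
    destruct IHn as [A B]. split.
    - assert (K := R0 (- Z.of_nat (S n))%Z).
      replace (- Z.of_nat (S n) + 2)%Z with (- Z.of_nat n + 1)%Z in K by lia.
      replace (- Z.of_nat (S n) + 1)%Z with (- Z.of_nat n)%Z in K by lia.
      rewrite A, B in K. lra.
    - replace (- Z.of_nat (S n) + 1)%Z with (- Z.of_nat n)%Z by lia. exact A. }
  intros j. destruct (Z_le_gt_dec 0 j).
  - replace j with (Z.of_nat (Z.to_nat j)) by lia. apply P.
  - replace j with (- Z.of_nat (Z.to_nat (- j)))%Z by lia. apply N.
Qed.

Definition isrec (u : Z -> R) := forall j, u (j + 2)%Z = u (j + 1)%Z + u j.

Lemma isrec_gib a b : isrec (gib a b).
Proof. intros j; apply gib_rec. Qed.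

Lemma isrec_shift k u : isrec u -> forall j, u (j + 2 + k)%Z = u (j + 1 + k)%Z + u (j + k)%Z.
Proof.
  intros H j. replace (j + 2 + k)%Z with ((j + k) + 2)%Z by lia.
  replace (j + 1 + k)%Z with ((j + k) + 1)%Z by lia. apply H.
Qed.

Lemma luc_fib t : Luc (t + 2) + Luc t = 5 * Fib (t + 1).
Proof.
  apply Rminus_diag_uniq.
  apply (zero_ext (fun t => Luc (t + 2) + Luc t - 5 * Fib (t + 1))).
  - intros j. unfold Luc, Fib.
    rewrite (isrec_shift 2 _ (isrec_gib 2 1) j), (isrec_shift 1 _ (isrec_gib 0 1) j),
      (isrec_gib 2 1 j). ring.
  - unfold Luc, Fib, gib, gib_pos, gib_neg. simpl. ring.
  - unfold Luc, Fib, gib, gib_pos, gib_neg. simpl. ring.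
Qed.

Lemma fib_luc t : Fib (t + 2) + Fib t = Luc (t + 1).
Proof.
  apply Rminus_diag_uniq.
  apply (zero_ext (fun t => Fib (t + 2) + Fib t - Luc (t + 1))).
  - intros j. unfold Luc, Fib.
    rewrite (isrec_shift 2 _ (isrec_gib 0 1) j), (isrec_shift 1 _ (isrec_gib 2 1) j),
      (isrec_gib 0 1 j). ring.
  - unfold Luc, Fib, gib, gib_pos, gib_neg. simpl. ring.
  - unfold Luc, Fib, gib, gib_pos, gib_neg. simpl. ring.
Qed.

Lemma be2 : beta * beta = beta + 1.
Proof. rewrite be. assert (E := al2). lra. Qed.

Lemma s5a : sqrt 5 = 2 * alpha - 1.
Proof. unfold alpha. field. Qed.

Lemma binet (s : nat -> R) : (forall n, s (S (S n)) = s (S n) + s n) ->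
  forall n, s n = (s 1%nat - beta * s 0%nat) / sqrt 5 * alpha ^ n
               + (alpha * s 0%nat - s 1%nat) / sqrt 5 * beta ^ n.
Proof.
  intros Hs.
  assert (P5 := s5pos). assert (A := al2). assert (B := be2).
  assert (K : forall n, s n = (s 1%nat - beta * s 0%nat) / sqrt 5 * alpha ^ n
               + (alpha * s 0%nat - s 1%nat) / sqrt 5 * beta ^ n /\
               s (S n) = (s 1%nat - beta * s 0%nat) / sqrt 5 * alpha ^ (S n)
               + (alpha * s 0%nat - s 1%nat) / sqrt 5 * beta ^ (S n)).
  { induction n.
    - assert (Q := alpos). split; simpl; rewrite s5a; unfold beta; rewrite s5a; field; lra.
    - destruct IHn as [H1 H2]. split. exact H2.
      rewrite Hs, H1, H2. simpl.
      replace (alpha * (alpha * alpha ^ n)) with ((alpha * alpha) * alpha ^ n) by ring.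
      replace (beta * (beta * beta ^ n)) with ((beta * beta) * beta ^ n) by ring.
      rewrite A, B. ring. }
  intros n; apply K.
Qed.

Lemma gen a b t : is_series (fun k => term (gib a b) t (S k))
  (sqrt 2 * gib a b (t + 1) * ln alpha + ln 2 / sqrt 10 * (gib a b (t + 2) + gib a b t)).
Proof.
  set (s := fun n : nat => gib a b (Z.of_nat n + t)).
  assert (Hs : forall n, s (S (S n)) = s (S n) + s n).
  { intros n. unfold s. replace (Z.of_nat (S (S n)) + t)%Z with ((Z.of_nat n + t) + 2)%Z by lia.
    replace (Z.of_nat (S n) + t)%Z with ((Z.of_nat n + t) + 1)%Z by lia. apply gib_rec. }
  assert (B := binet s Hs).
  set (U := (s 1%nat - beta * s 0%nat) / sqrt 5) in B.
  set (V := (alpha * s 0%nat - s 1%nat) / sqrt 5) in B.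
  assert (P := alpos). assert (P5 := s5pos).
  assert (H1 : Rabs (alpha / 8) < / 4).
  { assert (E := al2). assert (alpha < 2) by nra. rewrite Rabs_pos_eq by lra. lra. }
  assert (H2 : Rabs (beta / 8) < / 4).
  { assert (E := al2). assert (alpha < 2) by nra. rewrite be, Rabs_left; lra. }
  assert (S1 := is_series_scal U _ _ (ser _ H1)).
  assert (S2 := is_series_scal V _ _ (ser _ H2)).
  assert (S3 := is_series_plus _ _ _ _ S1 S2).
  rewrite Lval1, Lval2 in S3.
  change (is_series (fun n => U * (aa (S n) * (alpha / 8) ^ S n) + V * (aa (S n) * (beta / 8) ^ S n))
    (U * (sqrt 2 * alpha * (ln 2 + 2 * ln alpha) / 2) +
     V * (- sqrt 2 * (alpha - 1) * (2 * ln alpha - ln 2) / 2))) in S3.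
  assert (EQ : forall n, U * (aa (S n) * (alpha / 8) ^ S n) + V * (aa (S n) * (beta / 8) ^ S n) = term (gib a b) t (S n)).
  { intros n. unfold term. change (gib a b (Z.of_nat (S n) + t)) with (s (S n)).
    rewrite B. unfold aa, cc, Rdiv. rewrite !Rpow_mult_distr, !pow_inv. ring. }
  apply (is_series_ext _ _ _ EQ) in S3.
  replace (sqrt 2 * gib a b (t + 1) * ln alpha + ln 2 / sqrt 10 * (gib a b (t + 2) + gib a b t))
    with (U * (sqrt 2 * alpha * (ln 2 + 2 * ln alpha) / 2) +
     V * (- sqrt 2 * (alpha - 1) * (2 * ln alpha - ln 2) / 2)); [exact S3|].
  rewrite gib_rec.
  replace (gib a b (t + 1)) with (s 1%nat) by (unfold s; f_equal; lia).
  replace (gib a b t) with (s 0%nat) by (unfold s; f_equal).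
  rewrite (B 1%nat), (B 0%nat). simpl pow.
  replace (sqrt 10) with (sqrt 2 * (2 * alpha - 1)).
  2:{ rewrite <- s5a, <- sqrt_mult by lra. f_equal; lra. }
  rewrite be.
  assert (0 < sqrt 2) by (apply sqrt_lt_R0; lra).
  assert (E := al2).
  replace (U * 1 + V * 1) with (U + V) by ring.
  replace (U * (alpha * 1) + V * ((1 - alpha) * 1) + (U + V) + (U + V))
    with (U * (alpha * (2 * alpha - 1)) + V * ((alpha - 1) * (2 * alpha - 1))).
  2:{ assert (Zq : alpha * alpha - alpha - 1 = 0) by lra.
      assert (K : U * (alpha * (2 * alpha - 1)) + V * ((alpha - 1) * (2 * alpha - 1)) =
        U * (alpha * 1) + V * ((1 - alpha) * 1) + (U + V) + (U + V) + 2 * (U + V) * (alpha * alpha - alpha - 1)) by ring.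
      rewrite Zq, Rmult_0_r, Rplus_0_r in K. exact K. }
  clearbody U V. assert (Q2 : sqrt 2 <> 0) by lra. assert (Qa : 2 * alpha - 1 <> 0) by lra. generalize (ln 2) (ln alpha). clear -Q2 Qa. intros l L.
  assert (Hr : sqrt 2 * sqrt 2 = 2) by (apply sqrt_sqrt; lra).
  replace (l / (sqrt 2 * (2 * alpha - 1))) with (l * sqrt 2 / (sqrt 2 * sqrt 2 * (2 * alpha - 1))) by (field; split; auto).
  rewrite Hr. field. auto.
Qed.

Theorem theorem12 :
  (forall t : Z,
     is_series (fun k : nat => term Luc t (S k))
       (sqrt 2 * Luc (t + 1) * ln alpha + sqrt 10 * ln 2 / 2 * Fib (t + 1)))
  /\
  (forall t : Z,
     is_series (fun k : nat => term Fib t (S k))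
       (sqrt 2 * Fib (t + 1) * ln alpha + ln 2 / sqrt 10 * Luc (t + 1)))
  /\
  (forall (a b : R) (t : Z), ~ (a = 0 /\ b = 0) ->
     is_series (fun k : nat => term (gib a b) t (S k))
       (sqrt 2 * gib a b (t + 1) * ln alpha
        + ln 2 / sqrt 10 * (gib a b (t + 2) + gib a b t))).
Proof.
  split; [|split].
  - intros t. assert (G := gen 2 1 t). fold Luc in G.
    rewrite luc_fib in G.
    replace (sqrt 10 * ln 2 / 2 * Fib (t + 1)) with (ln 2 / sqrt 10 * (5 * Fib (t + 1))).
    exact G.
    assert (H : sqrt 10 * sqrt 10 = 10) by (apply sqrt_sqrt; lra).
    assert (0 < sqrt 10) by (apply sqrt_lt_R0; lra).
    apply Rmult_eq_reg_l with (sqrt 10). 2: lra.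
    field_simplify; [|lra]. replace (sqrt 10 ^ 2) with 10 by (simpl; rewrite Rmult_1_r; exact (eq_sym H)). field.
  - intros t. assert (G := gen 0 1 t). fold Fib in G.
    rewrite fib_luc in G. exact G.
  - intros a b t _. apply gen.
Qed.
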